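(* Let $M\in\mathbb{R}^{n\times n}$ be symmetric positive definite, $N\ge1$, timestep sizes $\delta_0,\dots,\delta_N>0$ fixed, $\theta_0,\theta_{-1}\in\mathbb{R}^n$ fixed, and let $\mathcal X$ be the set of admissible control values. Suppose $\bar P(\theta_i,u)=Q(\theta_i)+b(\theta_i,u)$ where $Q:\mathbb{R}^n\to\mathbb{R}$ and, for each $u\in\mathcal X$, $b(\cdot,u)$ are twice differentiable with locally Lipschitz second derivatives and curvature bounded with a constant $L$ independent of $u$, and $\|\partial^2 b/\partial\theta_i\partial u\|$ is uniformly bounded over all $\theta_i\in\mathbb{R}^n$, $u\in\mathcal X$. With $\bar E_i=\frac{1}{2\delta_i^2}\|\theta_i-(1+\delta_i/\delta_{i-1})\theta_{i-1}+(\delta_i/\delta_{i-1})\theta_{i-2}\|_M^2+\bar P(\theta_i,u_{\iota(i)})$ for $i=1,\dots,N$, let $J_\theta(\theta,u)$ be the block matrix with $(i,k)$ block $\partial^2\bar E_i/\partial\theta_i\partial\theta_k$ ($i,k=1,\dots,N$), and let $J_u(\theta,u)$ be the block-diagonal matrix with diagonal blocks $\partial^2\bar E_i/\partial\theta_i\partial u_{\iota(i)}$. Then (i) $\sigma_{\max}(J_\theta)$ and (ii) $\sigma_{\max}(J_u)$ are upper bounded uniformly over all $\theta=(\theta_1,\dots,\theta_N)$ and all controls in $\mathcal X$.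
   Context: $\|x\|_M^2=x^TMx$; $\sigma_{\max}$ is the largest singular value. A function is $L$-curvature bounded if $\phi+\frac L2\|\cdot\|^2$ is convex and $\nabla\phi$ is $L$-Lipschitz. The map $\iota$ assigns to each frame index the index of the control used at that frame. *)

(* Defs.v *)
From HB Require Import structures.
From mathcomp Require Import all_boot all_order all_algebra.
From mathcomp Require Import all_classical all_reals all_analysis.
Set Implicit Arguments. Unset Strict Implicit. Unset Printing Implicit Defensive.
Import Order.TTheory GRing.Theory Num.Theory.
Import numFieldNormedType.Exports.
Local Open Scope ring_scope.
Local Open Scope classical_set_scope.

Section Defs.
Variable R : realType.

Definition enorm (n : nat) (x : 'rV[R]_n) : R := Num.sqrt (\sum_(j < n) x 0 j ^+ 2).

Definition sqnormM (n : nat) (M : 'M[R]_n) (x : 'rV[R]_n) : R := (x *m M *m x^T) 0 0.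

Definition sigma_max (p q : nat) (A : 'M[R]_(p, q)) : R :=
  sup [set Num.sqrt a | a in [set a : R | eigenvalue (A^T *m A) a]].

Definition grad (n : nat) (f : 'rV[R]_n -> R) (x : 'rV[R]_n) : 'rV[R]_n :=
  \row_j derive f x (delta_mx 0 j).
Definition hess (n : nat) (f : 'rV[R]_n -> R) (x : 'rV[R]_n) : 'M[R]_n :=
  \matrix_(j, l) derive (fun y => derive f y (delta_mx 0 j)) x (delta_mx 0 l).

Definition twice_differentiable (n : nat) (f : 'rV[R]_n -> R) : Prop :=
  (forall x, differentiable f x) /\ (forall x, differentiable (grad f) x).

Definition hess_locally_lipschitz (n : nat) (f : 'rV[R]_n -> R) : Prop :=
  forall x, exists r : R, 0 < r /\ exists C : R, forall y z,
    `|y - x| < r -> `|z - x| < r -> `|hess f y - hess f z| <= C * `|y - z|.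

Definition convex_fun (n : nat) (g : 'rV[R]_n -> R) : Prop :=
  forall x y (t : R), 0 <= t -> t <= 1 ->
    g (t *: x + (1 - t) *: y) <= t * g x + (1 - t) * g y.

Definition curvature_bounded (n : nat) (L : R) (phi : 'rV[R]_n -> R) : Prop :=
  convex_fun (fun x => phi x + L / 2 * enorm x ^+ 2) /\
  (forall x y, enorm (grad phi x - grad phi y) <= L * enorm (x - y)).

Definition mixed_hess (n m : nat) (b : 'rV[R]_n -> 'rV[R]_m -> R)
  (th : 'rV[R]_n) (u : 'rV[R]_m) : 'M[R]_(n, m) :=
  \matrix_(j, l) derive (fun v => derive (fun y => b y v) th (delta_mx 0 j)) u (delta_mx 0 l).

(* theta at shifted index k = (paper index) + 1: k = 0 is theta_{-1}, k = 1 is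
   theta_0, k = i+2 is theta_{i+1} = row i of Th. *)
Definition thAt (N n : nat) (Th : 'M[R]_(N, n)) (th0 thm1 : 'rV[R]_n) (k : nat)
  : 'rV[R]_n :=
  match k with
  | 0 => thm1
  | 1 => th0
  | k'.+2 => match (insub k' : option 'I_N) with Some i => row i Th | None => 0 end
  end.

(* \bar E_{i+1}(theta, u) for i : 'I_N (paper index i+1 in 1..N);
   delta k is the paper's delta_k; row k of U is the control u_{k} *)
Definition Ebar (N n m K : nat) (M : 'M[R]_n) (delta : nat -> R)
  (th0 thm1 : 'rV[R]_n) (Q : 'rV[R]_n -> R) (b : 'rV[R]_n -> 'rV[R]_m -> R)
  (iota : 'I_N -> 'I_K) (i : 'I_N) (Th : 'M[R]_(N, n)) (U : 'M[R]_(K, m)) : R :=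
  let th := thAt Th th0 thm1 in
  let r := delta i.+1 / delta i in
  (2 * delta i.+1 ^+ 2)^-1 * sqnormM M (th i.+2 - (1 + r) *: th i.+1 + r *: th i)
  + (Q (th i.+2) + b (th i.+2) (row (iota i) U)).

Definition Jtheta_block (N n m K : nat) (E : 'I_N -> 'M[R]_(N, n) -> 'M[R]_(K, m) -> R)
  (Th : 'M[R]_(N, n)) (U : 'M[R]_(K, m)) (i k : 'I_N) : 'M[R]_n :=
  \matrix_(j, l) derive (fun Th' => derive (fun Th'' => E i Th'' U) Th' (delta_mx i j))
                        Th (delta_mx k l).

Definition Ju_block (N n m K : nat) (E : 'I_N -> 'M[R]_(N, n) -> 'M[R]_(K, m) -> R)
  (iota : 'I_N -> 'I_K) (Th : 'M[R]_(N, n)) (U : 'M[R]_(K, m)) (i : 'I_N) : 'M[R]_(n, m) :=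
  \matrix_(j, l) derive (fun U' => derive (fun Th' => E i Th' U') Th (delta_mx i j))
                        U (delta_mx (iota i) l).

Definition Jtheta (N n m K : nat) (E : 'I_N -> 'M[R]_(N, n) -> 'M[R]_(K, m) -> R)
  (Th : 'M[R]_(N, n)) (U : 'M[R]_(K, m)) :
  'M[R]_(\sum_(i < N) n, \sum_(k < N) n) :=
  @mxblock R N N (fun _ => n) (fun _ => n) (fun i k => Jtheta_block E Th U i k).

Definition Ju (N n m K : nat) (E : 'I_N -> 'M[R]_(N, n) -> 'M[R]_(K, m) -> R)
  (iota : 'I_N -> 'I_K) (Th : 'M[R]_(N, n)) (U : 'M[R]_(K, m)) :
  'M[R]_(\sum_(i < N) n, \sum_(k < N) m) :=
  @mxblock R N N (fun _ => n) (fun _ => m)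
    (fun i k => if i == k then Ju_block E iota Th U i else 0).

End Defs.

(* Main.v *)
Require Import Defs.
From HB Require Import structures.
From mathcomp Require Import all_boot all_order all_algebra.
From mathcomp Require Import all_classical all_reals all_analysis.
From mathcomp Require Import ring lra.
Import Order.TTheory GRing.Theory Num.Theory.
Import numFieldNormedType.Exports.
Local Open Scope ring_scope.
Local Open Scope classical_set_scope.

Set Implicit Arguments. Unset Strict Implicit. Unset Printing Implicit Defensive.
Section S.
Variable R : realType.

Lemma eig_bound q (G : 'M[R]_q) a : eigenvalue G a ->
  `|a| <= \sum_i \sum_j `|G i j|.
Proof.
move=> /eigenvalueP [v vG v0].
have [j1 vj1] : exists j, v 0 j != 0.
  apply/existsP; apply: contraNT v0; rewrite negb_exists => /forallP H.
  by apply/eqP/rowP => j; rewrite mxE; apply/eqP; move: (H j); rewrite negbK.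
pose jm := [arg max_(j > j1) `|v 0 j|]%O.
have jmP : forall j, `|v 0 j| <= `|v 0 jm|.
  rewrite /jm; case: arg_maxP => //= x _ H j; exact: H.
have vjm : 0 < `|v 0 jm|.
  by apply: lt_le_trans (jmP j1); rewrite normr_gt0.
have e : a * v 0 jm = \sum_i v 0 i * G i jm.
  by move/matrixP: vG => /(_ 0 jm); rewrite !mxE => <-.
have h1 : `|a| * `|v 0 jm| <= `|v 0 jm| * \sum_i `|G i jm|.
  rewrite -normrM e [X in _ <= X]mulr_sumr.
  apply: le_trans (ler_norm_sum _ _ _) _.
  apply: ler_sum => i _; rewrite normrM; apply: ler_wpM2r => //; exact: jmP.
have h2 : `|a| <= \sum_i `|G i jm|.
  by rewrite -(ler_pM2r vjm) [X in _ <= X]mulrC.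
apply: le_trans h2 _; apply: ler_sum => i _.
rewrite (bigD1 jm) //= lerDl sumr_ge0 //.
Qed.


Definition eigset p q (A : 'M[R]_(p, q)) :=
  [set Num.sqrt a | a in [set a : R | eigenvalue (A^T *m A) a]].

Lemma sigma_le_of_eig p q (A : 'M[R]_(p, q)) K :
  0 <= K -> (forall a, eigenvalue (A^T *m A) a -> a <= K) ->
  sigma_max A <= Num.sqrt K.
Proof.
move=> K0 HK; rewrite /sigma_max.
set S := [set _ | _ in _].
have [ne|Ne] := pselect (S !=set0).
  apply: ge_sup => // _ [a Ha <-]; exact/ler_wsqrtr/HK.
have -> : S = set0.
  by apply/seteqP; split=> x // Sx; apply: Ne; exists x.
by rewrite sup0 sqrtr_ge0.
Qed.

Definition entK p q (c : R) : R := \sum_(i < q) \sum_(j < q) \sum_(k < p) c * c.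

Lemma eig_entry p q (A : 'M[R]_(p, q)) c : (forall i j, `|A i j| <= c) ->
  forall a, eigenvalue (A^T *m A) a -> a <= entK p q c.
Proof.
move=> Hc a /eig_bound Ha; apply: le_trans (ler_norm a) _.
apply: le_trans Ha _; apply: ler_sum => i _; apply: ler_sum => j _.
rewrite mxE; apply: le_trans (ler_norm_sum _ _ _) _; apply: ler_sum => k _.
rewrite !mxE normrM; apply: ler_pM => //; exact: Hc.
Qed.

Lemma entK_ge0 p q c : 0 <= entK p q c.
Proof. by rewrite /entK; do 3! (apply: sumr_ge0 => ? _); rewrite -expr2 sqr_ge0. Qed.

Lemma sigma_entry p q (A : 'M[R]_(p, q)) c : (forall i j, `|A i j| <= c) ->
  sigma_max A <= Num.sqrt (entK p q c).
Proof. by move=> Hc; apply: sigma_le_of_eig; [exact: entK_ge0|exact: eig_entry]. Qed.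

Lemma eigset_ub p q (A : 'M[R]_(p, q)) c : (forall i j, `|A i j| <= c) ->
  has_ubound (eigset A).
Proof.
move=> Hc; exists (Num.sqrt (entK p q c)) => _ [a Ha <-].
exact/ler_wsqrtr/(eig_entry Hc).
Qed.


Lemma derive_le (V : normedModType R) (f : V -> R) a v C : 0 <= C ->
  (forall h : R, h != 0 -> `|h^-1 * (f (h *: v + a) - f a)| <= C) ->
  `|derive f a v| <= C.
Proof.
move=> C0 HC; rewrite /derive.
set F := (fun h : R => _).
have FC : \forall h \near 0^', `|F h| <= C.
  near=> h; rewrite /F /= /shift; apply: HC.
  by near: h; exact: nbhs_dnbhs_neq.
have [cF|ncF] := pselect (cvg (F @ 0^')).
  rewrite ler_norml; apply/andP; split.
    apply: limr_ge => //; near=> h.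
    suff: `|F h| <= C by rewrite ler_norml => /andP[].
    by near: h.
  apply: limr_le => //; near=> h.
  suff: `|F h| <= C by rewrite ler_norml => /andP[].
  by near: h.
by rewrite dvgP // normr0.
Unshelve. all: by end_near.
Qed.


Lemma blockdiag_eig N n m (A_ : 'I_N -> 'M[R]_(n, m)) a :
  let G := @mxblock R N N (fun _ => n) (fun _ => m)
             (fun i k => if i == k then A_ i else 0) in
  eigenvalue (G^T *m G) a -> exists i, eigenvalue ((A_ i)^T *m A_ i) a.
Proof.
move=> G /eigenvalueP [v vG v0].
have ev : v = mxrow (fun j => submxrow v j) by rewrite submxrowK.
have GT : G^T = @mxblock R N N (fun _ => m) (fun _ => n)
             (fun i k => if i == k then (A_ i)^T else 0).
  rewrite /G tr_mxblock; apply: eq_mxblock => i k.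
  by rewrite eq_sym; case: eqP => [->|]; rewrite ?trmx0.
have H1 : v *m G^T = mxrow (fun j => submxrow v j *m (A_ j)^T).
  rewrite GT {1}ev mul_mxrow_mxblock; apply: eq_mxrow => j.
  rewrite (bigD1 j) //= eqxx big1 ?addr0 // => i /negbTE ->; exact: mulmx0.
have H2 : v *m (G^T *m G) = mxrow (fun j => submxrow v j *m ((A_ j)^T *m A_ j)).
  rewrite mulmxA H1 /G mul_mxrow_mxblock; apply: eq_mxrow => j.
  rewrite (bigD1 j) //= eqxx big1 ?addr0 ?mulmxA // => i /negbTE ->; exact: mulmx0.
have [j vj] : exists j, submxrow v j != 0.
  apply/existsP; apply: contraNT v0; rewrite negb_exists => /forallP H.
  rewrite ev; apply/eqP/matrixP => x y; rewrite [LHS]mxE [RHS]mxE.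
  by have := H (tagnat.sig1 y); rewrite negbK => /eqP ->; rewrite mxE.
exists j; apply/eigenvalueP; exists (submxrow v j) => //.
move: vG; rewrite H2 => /(congr1 (fun X => submxrow X j)); rewrite mxrowK => ->.
by apply/matrixP => x y; rewrite !mxE.
Qed.

Lemma near_shift (V : normedModType R) (e u : V) (P : V -> Prop) :
  (\forall v \near u, P v) -> \forall h \near (0 : R)^', P (h *: e + u).
Proof.
move=> Pu.
have : (fun h : R => h *: e + u) @ 0^' --> u.
  rewrite -[X in _ --> X]add0r; apply: cvgD; last exact: cvg_cst.
  rewrite -(scale0r e); apply: cvgZr_tmp.
  exact: nbhs_dnbhs.
by move=> /(_ _ Pu).
Qed.

Lemma derive_near (V W : normedModType R) (f : V -> R) (g : W -> R) a v a' v' :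
  (\forall h \near (0 : R)^', f (h *: v + a) - f a = g (h *: v' + a') - g a') ->
  derive f a v = derive g a' v'.
Proof.
move=> H; rewrite /derive; congr lim.
apply/seteqP; split; apply: near_eq_cvg; near=> h; rewrite /= /shift.
  by rewrite (near H h).
by rewrite (near H h).
Unshelve. all: by end_near.
Qed.


Lemma enorm_ge0 n (x : 'rV[R]_n) : 0 <= enorm x.
Proof. exact: sqrtr_ge0. Qed.

Lemma enorm_entry n (x : 'rV[R]_n) j : `|x 0 j| <= enorm x.
Proof.
rewrite /enorm -sqrtr_sqr; apply: ler_wsqrtr.
rewrite (bigD1 j) //= lerDl sumr_ge0 // => k _; exact: sqr_ge0.
Qed.

Lemma enormZ n (x : 'rV[R]_n) h : enorm (h *: x) = `|h| * enorm x.
Proof.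
rewrite /enorm (eq_bigr (fun j => h ^+ 2 * x 0 j ^+ 2)); last first.
  by move=> j _; rewrite mxE exprMn.
by rewrite -mulr_sumr sqrtrM ?sqr_ge0 // sqrtr_sqr.
Qed.

Lemma grad_lip n (f : 'rV[R]_n -> R) L : curvature_bounded L f ->
  forall y z j, `|derive f y (delta_mx 0 j) - derive f z (delta_mx 0 j)|
                <= `|L| * enorm (y - z).
Proof.
move=> [_ HL] y z j.
have := enorm_entry (grad f y - grad f z) j; rewrite !mxE => H.
apply: le_trans H _; apply: le_trans (HL y z) _.
by apply: ler_wpM2r; [exact: enorm_ge0|exact: ler_norm].
Qed.

Lemma row_delta N n (i : 'I_N) (j : 'I_n) : row i (delta_mx i j : 'M[R]_(N, n)) = delta_mx 0 j.
Proof. by apply/rowP => k; rewrite !mxE eqxx. Qed.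

Lemma rowZD p q (i : 'I_p) (D A : 'M[R]_(p, q)) h : row i (h *: D + A) = h *: row i D + row i A.
Proof. by apply/rowP => k; rewrite !mxE. Qed.

Lemma sq_shift n (M : 'M[R]_n) x w h :
  sqnormM M (h *: w + x) = sqnormM M x + h * ((x *m M *m w^T) 0 0 + (w *m M *m x^T) 0 0)
                           + h ^+ 2 * sqnormM M w.
Proof.
rewrite /sqnormM linearD /= linearZ /= !mulmxDl !mulmxDr -!scalemxAl -!scalemxAr.
rewrite !mxE /=. 
ring.
Qed.


Section E.
Variables (n m N K : nat) (M : 'M[R]_n) (delta : nat -> R) (th0 thm1 : 'rV[R]_n)
  (Q : 'rV[R]_n -> R) (b : 'rV[R]_n -> 'rV[R]_m -> R) (iota : 'I_N -> 'I_K).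
Let E := Ebar M delta th0 thm1 Q b iota.

Definition vv (Th : 'M[R]_(N, n)) x y (i : nat) :=
  thAt Th x y i.+2 - (1 + delta i.+1 / delta i) *: thAt Th x y i.+1
  + (delta i.+1 / delta i) *: thAt Th x y i.

Lemma thAt_shift (Th D : 'M[R]_(N, n)) h k :
  thAt (h *: D + Th) th0 thm1 k = h *: thAt D 0 0 k + thAt Th th0 thm1 k.
Proof.
case: k => [|[|k]] /=; rewrite ?scaler0 ?add0r //.
by case: insub => [i|]; rewrite ?rowZD // scaler0 addr0.
Qed.

Lemma vv_shift (Th D : 'M[R]_(N, n)) h i :
  vv (h *: D + Th) th0 thm1 i = h *: vv D 0 0 i + vv Th th0 thm1 i.
Proof. rewrite /vv !thAt_shift; apply/rowP => k; rewrite !mxE; ring. Qed.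

Lemma thAt_row (Th : 'M[R]_(N, n)) (i : 'I_N) : thAt Th th0 thm1 i.+2 = row i Th.
Proof. by rewrite /= valK. Qed.

Definition cc (i : nat) := (2 * delta i.+1 ^+ 2)^-1.

Lemma E_eq i (Th : 'M[R]_(N, n)) U : E i Th U =
  cc i * sqnormM M (vv Th th0 thm1 i) + (Q (row i Th) + b (row i Th) (row (iota i) U)).
Proof. rewrite /E /Ebar; cbv zeta; by rewrite -thAt_row. Qed.


Definition lin (Th D : 'M[R]_(N, n)) i :=
  (vv Th th0 thm1 i *m M *m (vv D 0 0 i)^T) 0 0 + (vv D 0 0 i *m M *m (vv Th th0 thm1 i)^T) 0 0.

Lemma dE (i : 'I_N) (Th D : 'M[R]_(N, n)) U :
  differentiable Q (row i Th) ->
  differentiable (fun y => b y (row (iota i) U)) (row i Th) ->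
  derive (fun Th' => E i Th' U) Th D =
  cc i * lin Th D i + (derive Q (row i Th) (row i D) +
     derive (fun y => b y (row (iota i) U)) (row i Th) (row i D)).
Proof.
move=> HQ Hb.
have dQ := @diff_derivable _ _ _ _ _ (row i D) HQ.
have db := @diff_derivable _ _ _ _ _ (row i D) Hb.
set qw := sqnormM M (vv D 0 0 i).
have HG : (fun h : R => cc i * (lin Th D i + h * qw) +
    (h^-1 *: ((Q \o shift (row i Th)) (h *: row i D) - Q (row i Th)) +
     h^-1 *: (((fun y => b y (row (iota i) U)) \o shift (row i Th)) (h *: row i D)
              - b (row i Th) (row (iota i) U)))) @ 0^'
   --> cc i * lin Th D i + (derive Q (row i Th) (row i D) +
     derive (fun y => b y (row (iota i) U)) (row i Th) (row i D)).
  apply: cvgD; last exact: cvgD.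
  rewrite -[X in _ --> X](_ : cc i * (lin Th D i + 0 * qw) = _); last first.
    by rewrite mul0r addr0.
  apply: cvgMl_tmp; apply: cvgD; first exact: cvg_cst.
  apply: cvgMr_tmp; exact: nbhs_dnbhs.
apply: cvg_lim => //; apply: cvg_trans HG; apply: near_eq_cvg.
near=> h.
have h0 : h != 0 by near: h; exact: nbhs_dnbhs_neq.
rewrite /= /shift !E_eq vv_shift sq_shift !rowZD /lin.
rewrite -/qw.
move: (Q (_ + row i Th)) (b (_ + row i Th) _) (Q (row i Th)) (b (row i Th) _).
move: ((vv Th th0 thm1 i *m M *m (vv D 0 0 i)^T) 0 0) ((vv D 0 0 i *m M *m (vv Th th0 thm1 i)^T) 0 0).
move: (sqnormM M (vv Th th0 thm1 i)) (cc i) qw => s1 s2 s3 s4 s5 s6 s7 s8 s9.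
rewrite /GRing.scale /=.
by field.
Unshelve. all: by end_near.
Qed.


Definition lin2 (D D' : 'M[R]_(N, n)) i :=
  (vv D' 0 0 i *m M *m (vv D 0 0 i)^T) 0 0 + (vv D 0 0 i *m M *m (vv D' 0 0 i)^T) 0 0.

Lemma lin_shift (Th D D' : 'M[R]_(N, n)) h i :
  lin (h *: D' + Th) D i = h * lin2 D D' i + lin Th D i.
Proof.
rewrite /lin /lin2 vv_shift.
move: (vv D' 0 0 i) (vv D 0 0 i) (vv Th th0 thm1 i) => w' w x.
rewrite mulmxDl mulmxDl -!scalemxAl raddfD /= linearZ /= mulmxDr -scalemxAr !mxE.
rewrite /GRing.scale /=; ring.
Qed.

Lemma dQ_bound (f : 'rV[R]_n -> R) L j (y d : 'rV[R]_n) h :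
  curvature_bounded L f -> h != 0 ->
  `|h^-1 * (derive f (h *: d + y) (delta_mx 0 j) - derive f y (delta_mx 0 j))|
   <= `|L| * enorm d.
Proof.
move=> cb h0; rewrite normrM; have := grad_lip cb (h *: d + y) y j.
rewrite addrK enormZ => H.
have hp : 0 < `|h| by rewrite normr_gt0.
rewrite normfV -(ler_pM2l hp) mulrA divff ?normr_eq0 // mul1r.
by apply: le_trans H _; rewrite mulrCA.
Qed.

Definition Jcst (L : R) (i k : 'I_N) (j l : 'I_n) : R :=
  `|cc i * lin2 (delta_mx i j) (delta_mx k l) i|
  + `|L| * enorm (row i (delta_mx k l : 'M[R]_(N, n)))
  + `|L| * enorm (row i (delta_mx k l : 'M[R]_(N, n))).

Lemma Jcst_ge0 L i k j l : 0 <= Jcst L i k j l.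
Proof. by rewrite /Jcst !addr_ge0 // mulr_ge0 // enorm_ge0. Qed.

Lemma Jth_entry L (i k : 'I_N) (j l : 'I_n) (Th : 'M[R]_(N, n)) U :
  (forall x, differentiable Q x) -> curvature_bounded L Q ->
  (forall x, differentiable (fun y => b y (row (iota i) U)) x) ->
  curvature_bounded L (fun y => b y (row (iota i) U)) ->
  `|Jtheta_block E Th U i k j l| <= Jcst L i k j l.
Proof.
move=> dQ cQ db cb; rewrite /Jtheta_block mxE.
apply: derive_le; first exact: Jcst_ge0.
move=> h h0; rewrite !dE // lin_shift !rowZD !row_delta.
set D' := delta_mx k l.
have -> : forall (c l2 l A1 A2 B1 B2 : R),
  h^-1 * (c * (h * l2 + l) + (A1 + B1) - (c * l + (A2 + B2))) =
  c * l2 + h^-1 * (A1 - A2) + h^-1 * (B1 - B2).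
  by move=> *; field.
rewrite /Jcst; apply: le_trans (ler_normD _ _) _; apply: lerD.
  apply: le_trans (ler_normD _ _) _; apply: lerD => //.
  exact: dQ_bound.
exact: dQ_bound.
Qed.


Lemma Ju_eq (i : 'I_N) (Th : 'M[R]_(N, n)) (U : 'M[R]_(K, m)) :
  (forall x, differentiable Q x) ->
  (\forall v \near row (iota i) U, forall th, differentiable (fun y => b y v) th) ->
  Ju_block E iota Th U i = mixed_hess b (row i Th) (row (iota i) U).
Proof.
move=> dQ Hn; apply/matrixP => j l; rewrite !mxE.
apply: derive_near.
have := near_shift (delta_mx 0 l) Hn; apply: filterS => h Hh.
have Hu := nbhs_singleton Hn.
rewrite !dE //; last by rewrite rowZD row_delta; exact: Hh.
rewrite rowZD !row_delta; ring.
Qed.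

End E.

Lemma eigset_ub2 p q (A : 'M[R]_(p, q)) : has_ubound (eigset A).
Proof.
exists (Num.sqrt (\sum_i \sum_j `|(A^T *m A) i j|)) => _ [a Ha <-].
apply: ler_wsqrtr; apply: le_trans (ler_norm a) _; exact: eig_bound.
Qed.

End S.

Theorem lemma3 (R : realType) (n m N K : nat)
  (M : 'M[R]_n) (delta : nat -> R) (th0 thm1 : 'rV[R]_n)
  (X : set 'rV[R]_m) (iota : 'I_N -> 'I_K)
  (Q : 'rV[R]_n -> R) (b : 'rV[R]_n -> 'rV[R]_m -> R) (L : R) :
  M^T = M ->
  (forall x : 'rV[R]_n, x != 0 -> 0 < sqnormM M x) ->
  (1 <= N)%N ->
  (forall i : nat, (i <= N)%N -> 0 < delta i) ->
  twice_differentiable Q -> hess_locally_lipschitz Q -> curvature_bounded L Q ->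
  (forall u, X u ->
     [/\ twice_differentiable (fun th => b th u),
         hess_locally_lipschitz (fun th => b th u) &
         curvature_bounded L (fun th => b th u)]) ->
  (* the mixed derivative d^2 b/(d theta d u) exists on X *)
  (forall u, X u -> \forall v \near u, forall th, differentiable (fun y => b y v) th) ->
  (forall u, X u -> forall th (j : 'I_n),
     differentiable (fun v => derive (fun y => b y v) th (delta_mx 0 j)) u) ->
  (exists B : R, forall th u, X u -> sigma_max (mixed_hess b th u) <= B) ->
  let E := Ebar M delta th0 thm1 Q b iota in
  (exists C : R, forall (Th : 'M[R]_(N, n)) (U : 'M[R]_(K, m)),
     (forall k, X (row k U)) -> sigma_max (Jtheta E Th U) <= C) /\
  (exists C : R, forall (Th : 'M[R]_(N, n)) (U : 'M[R]_(K, m)),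
     (forall k, X (row k U)) -> sigma_max (Ju E iota Th U) <= C).
Proof.
move=> _ _ _ _ [dQ _] _ cQ Hb Hn _ [B HB] E.
split.
  pose cmax := \big[Order.max/0]_(x : 'I_N * 'I_N * 'I_n * 'I_n)
                 Jcst M delta L x.1.1.1 x.1.1.2 x.1.2 x.2.
  exists (Num.sqrt (entK (\sum_(i < N) n) (\sum_(i < N) n) cmax)) => Th U XU.
  apply: sigma_entry => s t; rewrite mxE.
  have [[db _] _ cb] := Hb _ (XU (iota (tagnat.sig1 s))).
  have HJ := Jth_entry M delta th0 thm1 (b := b) (iota := iota) (i := tagnat.sig1 s) (U := U)
    (tagnat.sig1 t) (tagnat.sig2 s) (tagnat.sig2 t) Th dQ cQ db cb.
  apply: le_trans HJ _.
  exact: (le_bigmax 0 (fun x : 'I_N * 'I_N * 'I_n * 'I_n =>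
                 Jcst M delta L x.1.1.1 x.1.1.2 x.1.2 x.2)
              (tagnat.sig1 s, tagnat.sig1 t, tagnat.sig2 s, tagnat.sig2 t)).
exists (Order.max B 0) => Th U XU.
rewrite /sigma_max; set S := [set _ | _ in _].
have [ne|Ne] := pselect (S !=set0); last first.
  have -> : S = set0.
    by apply/seteqP; split=> x // Sx; apply: Ne; exists x.
  by rewrite sup0 le_max lexx orbT.
apply: ge_sup => // _ [a Ha <-].
have [i Hi] := @blockdiag_eig R N n m (fun i => Ju_block E iota Th U i) a Ha.
move: Hi; rewrite Ju_eq //; last exact: Hn.
move=> Hi.
have H1 : Num.sqrt a <= sigma_max (mixed_hess b (row i Th) (row (iota i) U)).
  apply: ub_le_sup; first exact: eigset_ub2.
  by exists a.
apply: le_trans H1 _; apply: le_trans (HB _ _ (XU (iota i))) _.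
by rewrite le_max lexx.
Qed.
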